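(* Let $R$ be a unital ring with involution, let $a\in R$ be core invertible with core inverse $a^{\circledast}$, and let $b\in R$. Then the following conditions are equivalent: (1) $a\overset{\circledast}{\leq} b$; (2) $b a^{\circledast} b=a$ and $a^{\circledast} b a^{\circledast}=a^{\circledast}$; (3) $a a^{\circledast} b=a=b a^{\circledast} a$; (4) $b-a\in {}^{\circ}a\cap (a^{*})^{\circ}$, i.e. $(b-a)a=0$ and $a^{*}(b-a)=0$; (5) $b-a\in (1-aa^{\circledast})R\cap R(1-aa^{\circledast})$; (6) $b-a\in {}^{\circ}(aa^{\circledast})\cap (aa^{\circledast})^{\circ}$, i.e. $(b-a)aa^{\circledast}=0$ and $aa^{\circledast}(b-a)=0$.
   Context: $R$ is a ring with identity and an involution $x\mapsto x^{*}$ (so $(x^* )^*=x$, $(xy)^*=y^*x^*$, $(x+y)^*=x^*+y^*$). An element $a\in R$ is core invertible if there exists $x\in R$ with $axa=a$, $xR=aR$ and $Rx=Ra^{*}$; such $x$ is unique, called the core inverse of $a$ and denoted $a^{\circledast}$. For $a$ core invertible and $b\in R$, the core partial order is defined by $a\overset{\circledast}{\leq} b$ iff $a^{\circledast}a=a^{\circledast}b$ and $aa^{\circledast}=ba^{\circledast}$. For $c\in R$, ${}^{\circ}c=\{x\in R: xc=0\}$ and $c^{\circ}=\{x\in R: cx=0\}$; $cR=\{cx:x\in R\}$, $Rc=\{xc:x\in R\}$. *)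

(* Defs.v *)
From HB Require Import structures.
From mathcomp Require Import all_boot all_algebra.
Set Implicit Arguments. Unset Strict Implicit. Unset Printing Implicit Defensive.
Import GRing.Theory.
Local Open Scope ring_scope.

Definition is_involution (R : pzRingType) (s : R -> R) : Prop :=
  [/\ forall x, s (s x) = x,
      forall x y, s (x * y) = s y * s x &
      forall x y, s (x + y) = s x + s y].

Definition in_rideal (R : pzRingType) (c z : R) : Prop := exists y, z = c * y.
Definition in_lideal (R : pzRingType) (c z : R) : Prop := exists y, z = y * c.

Definition is_core_inverse (R : pzRingType) (s : R -> R) (a x : R) : Prop :=
  [/\ a * x * a = a,
      forall z, in_rideal x z <-> in_rideal a z &
      forall z, in_lideal x z <-> in_lideal (s a) z].

(* Core partial order, given the core inverse ac of a. *)
Definition core_le (R : pzRingType) (a ac b : R) : Prop :=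
  ac * a = ac * b /\ a * ac = b * ac.

(* Main.v *)
Require Import Defs.
From HB Require Import structures.
From mathcomp Require Import all_boot all_algebra.
Import GRing.Theory.
Local Open Scope ring_scope.

Lemma sub0P (R : pzRingType) (x y : R) : x - y = 0 <-> x = y.
Proof. split; last by move=> ->; exact: subrr.
by move/eqP; rewrite subr_eq0 => /eqP. Qed.

Theorem theorem2p3 (R : pzRingType) (s : R -> R) (a ac b : R) :
  is_involution s ->
  is_core_inverse s a ac ->
  [/\ (core_le a ac b <->
       (b * ac * b = a /\ ac * b * ac = ac)),
      (core_le a ac b <->
       (a * ac * b = a /\ b * ac * a = a)),
      (core_le a ac b <->
       ((b - a) * a = 0 /\ s a * (b - a) = 0)),
      (core_le a ac b <->
       (in_rideal (1 - a * ac) (b - a) /\ in_lideal (1 - a * ac) (b - a))) &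
      (core_le a ac b <->
       ((b - a) * (a * ac) = 0 /\ (a * ac) * (b - a) = 0))].
Proof.
move=> [sK sM sD] [Haxa Hr Hl].
set x := ac in Haxa Hr Hl *.
have [u hu] : in_rideal a x by apply/Hr; exists 1; rewrite mulr1.
have [v hv] : in_rideal x a by apply/Hr; exists 1; rewrite mulr1.
have [w hw] : in_lideal (s a) x by apply/Hl; exists 1; rewrite mul1r.
have [t ht] : in_lideal x (s a) by apply/Hl; exists 1; rewrite mul1r.
have pp : a * x * (a * x) = a * x by rewrite mulrA Haxa.
have xsp : x = x * s (a * x).
  rewrite [in LHS]hw -[in s a]Haxa (sM (a * x) a) mulrA -hw //.
have sp : s (a * x) = a * x.
  have e1 : a * x = a * x * s (a * x) by rewrite -mulrA -xsp.
  have e2 : s (a * x) = a * x * s (a * x) by rewrite {1}e1 sM sK.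
  by rewrite e2 -e1.
have xp : x * (a * x) = x by rewrite -sp -xsp.
have pa : a * x * a = a by [].
have sap : s a * (a * x) = s a by rewrite -sp -sM pa.
have E1 : forall y, y * a = 0 <-> y * x = 0.
  move=> y; split=> h; [by rewrite hu mulrA h mul0r | by rewrite hv mulrA h mul0r].
have E2 : forall y, y * a = 0 <-> y * (a * x) = 0.
  move=> y; split=> h; [by rewrite mulrA h mul0r | by rewrite -pa mulrA h mul0r].
have E3 : forall y, s a * y = 0 <-> x * y = 0.
  move=> y; split=> h; [by rewrite hw -mulrA h mulr0 | by rewrite ht -mulrA h mulr0].
have E4 : forall y, x * y = 0 <-> a * x * y = 0.
  move=> y; split=> h; [by rewrite -mulrA h mulr0 | by rewrite -[X in X * y]xp -(mulrA x) h mulr0].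
have C : core_le a x b <-> (x * (b - a) = 0 /\ (b - a) * x = 0).
  rewrite /core_le mulrBr mulrBl; split=> [[h1 h2]|[/sub0P h1 /sub0P h2]].
    by split; apply/sub0P.
  by [].
split.
- split.
  + move/C=> [h1 h2].
    have xb : x * b = x * a by apply/sub0P; rewrite -mulrBr.
    have bx : b * x = a * x by apply/sub0P; rewrite -mulrBl.
    split; first by rewrite bx -mulrA xb mulrA Haxa.
    by rewrite xb -[RHS]xp mulrA.
  + move=> [h1 h2]; rewrite /core_le.
    split; last by rewrite -h1 -!mulrA (mulrA x) h2.
    by rewrite -h1 !mulrA h2.
- apply: (iff_trans C); split.
  + move=> [h1 h2]; split.
      apply/sub0P; move/E4: h1; by rewrite mulrBr pa.
    apply/sub0P; rewrite -[X in _ - X]Haxa -!mulrBl h2 mul0r //.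
  + move=> [h1 h2]; split.
      apply/E4; by rewrite mulrBr pa h1 subrr.
    have : (b - a) * x * a = 0 by rewrite !mulrBl h2 Haxa subrr.
    move=> h; by rewrite -xp !mulrA h !mul0r.
- apply: (iff_trans C); have := E1 (b - a); have := E3 (b - a); tauto.
- apply: (iff_trans C); split.
  + move=> [h1 h2]; split.
      exists (b - a); by rewrite mulrBl mul1r (proj1 (E4 _) h1) subr0.
    exists (b - a); by rewrite mulrBr mulr1 (proj1 (E2 _) (proj2 (E1 _) h2)) subr0.
  + move=> [[y hy] [z hz]]; split.
      apply/E4; by rewrite hy mulrA mulrBr mulr1 pp subrr mul0r.
    apply/E1/E2; by rewrite hz -mulrA mulrBl mul1r pp subrr mulr0.
- apply: (iff_trans C); have := E1 (b - a); have := E2 (b - a); have := E4 (b - a); tauto.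
Qed.
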